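(* For every cosieve $J\colon\mathbf{A}\to\mathbf{B}$ there is exactly one lens whose get functor is $J$, and this lens is a monomorphism in $\mathbf{Lens}$; conversely, the get functor of every monomorphism in $\mathbf{Lens}$ is a cosieve. Thus $U$ restricts to a bijection between monic lenses and cosieves.
   Context: A lens $F\colon \mathbf{A}\to\mathbf{B}$ between small categories consists of a functor $F\colon\mathbf{A}\to\mathbf{B}$ (the get functor) together with, for each object $A$ of $\mathbf{A}$, a function $\varphi_{F,A}$ from the set of morphisms of $\mathbf{B}$ with domain $FA$ to the set of morphisms of $\mathbf{A}$ with domain $A$, such that: $F(\varphi_{F,A}b)=b$; $\varphi_{F,A}(\mathrm{id}_{FA})=\mathrm{id}_A$; and $\varphi_{F,A}(b'\circ b)=\varphi_{F,A'}(b')\circ\varphi_{F,A}(b)$ whenever $b$ has domain $FA$, $A'$ is the codomain of $\varphi_{F,A}b$, and $b'$ has domain $FA'$. $\mathbf{Lens}$ is the category of small categories and lenses, with composite of $F\colon\mathbf{A}\to\mathbf{B}$, $G\colon\mathbf{B}\to\mathbf{C}$ having get functor $G\circ F$ and puts $\varphi_{G\circ F,A}(c)=\varphi_{F,A}(\varphi_{G,FA}(c))$. $U\colon\mathbf{Lens}\to\mathbf{Cat}$ sends a lens to its get functor. A functor $F\colon\mathbf{A}\to\mathbf{B}$ is a discrete opfibration if for each object $A$ of $\mathbf{A}$ and each morphism $b$ of $\mathbf{B}$ with domain $FA$ there is a unique morphism $a$ of $\mathbf{A}$ with domain $A$ and $Fa=b$. A cosieve is a discrete opfibration that is injective on objects.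 *)

(* Defs.v *)
From Stdlib Require Import ProofIrrelevance.
Set Implicit Arguments.

Record Category := {
  ob : Type;
  mor : Type;
  dom : mor -> ob;
  cod : mor -> ob;
  idm : ob -> mor;
  cmp : mor -> mor -> mor;  (* cmp g f = g o f, meaningful when cod f = dom g *)
  dom_idm : forall x, dom (idm x) = x;
  cod_idm : forall x, cod (idm x) = x;
  dom_cmp : forall f g, cod f = dom g -> dom (cmp g f) = dom f;
  cod_cmp : forall f g, cod f = dom g -> cod (cmp g f) = cod g;
  cmp_id_r : forall f, cmp f (idm (dom f)) = f;
  cmp_id_l : forall f, cmp (idm (cod f)) f = f;
  cmp_assoc : forall f g h, cod f = dom g -> cod g = dom h ->
      cmp h (cmp g f) = cmp (cmp h g) f
}.
Arguments dom {c} _.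
Arguments cod {c} _.
Arguments idm {c} _.
Arguments cmp {c} _ _.

Record Functor (A B : Category) := {
  fob : ob A -> ob B;
  fmor : mor A -> mor B;
  fdom : forall f, dom (fmor f) = fob (dom f);
  fcod : forall f, cod (fmor f) = fob (cod f);
  fidm : forall x, fmor (idm x) = idm (fob x);
  fcmp : forall f g, cod f = dom g -> fmor (cmp g f) = cmp (fmor g) (fmor f)
}.

Record Lens (A B : Category) := {
  get : Functor A B;
  put : forall x : ob A, {b : mor B | dom b = fob get x} -> mor A;
  put_dom : forall x b, dom (put x b) = x;
  put_get : forall x b, fmor get (put x b) = proj1_sig b;
  put_idm : forall x (h : dom (idm (fob get x)) = fob get x),
      put x (exist _ (idm (fob get x)) h) = idm x;
  put_cmp : forall x (b b' : mor B) (hb : dom b = fob get x)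
      (hb' : dom b' = fob get (cod (put x (exist _ b hb))))
      (hbb : dom (cmp b' b) = fob get x),
      put x (exist _ (cmp b' b) hbb)
      = cmp (put (cod (put x (exist _ b hb))) (exist _ b' hb'))
            (put x (exist _ b hb))
}.

Lemma put_irr A B (L : Lens A B) x1 x2 (b1 b2 : mor B)
  (h1 : dom b1 = fob (get L) x1) (h2 : dom b2 = fob (get L) x2) :
  x1 = x2 -> b1 = b2 -> put L x1 (exist _ b1 h1) = put L x2 (exist _ b2 h2).
Proof. intros -> ->. f_equal. f_equal. apply proof_irrelevance. Qed.

Definition functor_comp A B C (F : Functor A B) (G : Functor B C) : Functor A C.
Proof.
  refine {| fob := fun x => fob G (fob F x);
            fmor := fun f => fmor G (fmor F f) |}.
  - intros f. now rewrite fdom, fdom.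
  - intros f. now rewrite fcod, fcod.
  - intros x. now rewrite fidm, fidm.
  - intros f g h. rewrite fcmp by exact h. apply fcmp. now rewrite fcod, fdom, h.
Defined.

Definition lens_comp_put A B C (F : Lens A B) (G : Lens B C) (x : ob A)
  (c : {c : mor C | dom c = fob (functor_comp (get F) (get G)) x}) : mor A :=
  put F x (exist _ (put G (fob (get F) x) c) (put_dom G (fob (get F) x) c)).

Definition lens_comp A B C (F : Lens A B) (G : Lens B C) : Lens A C.
Proof.
  refine {| get := functor_comp (get F) (get G); put := @lens_comp_put A B C F G |}.
  - intros x c. unfold lens_comp_put. apply put_dom.
  - intros x c. unfold lens_comp_put. simpl. rewrite put_get. simpl. apply put_get.
  - intros x h. unfold lens_comp_put.
    assert (E : put G (fob (get F) x) (exist _ (idm (fob (get G) (fob (get F) x))) h)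
                = idm (fob (get F) x)) by apply put_idm.
    erewrite (put_irr F (x1:=x) (x2:=x) (b2:=idm (fob (get F) x)) _ (dom_idm _ _) eq_refl E).
    apply put_idm.
  - intros x c c' hc hc' hcc. unfold lens_comp_put in *. simpl in *.
    set (b := put G (fob (get F) x) (exist _ c hc)) in *.
    set (pd := put_dom G (fob (get F) x) (exist _ c hc)) in *.
    set (x1 := cod (put F x (exist _ b pd))) in *.
    assert (Ex1 : fob (get F) x1 = cod b).
    { unfold x1. rewrite <- fcod, put_get. reflexivity. }
    assert (h' : dom c' = fob (get G) (cod b)) by (rewrite hc', Ex1; reflexivity).
    assert (E1 : put G (fob (get F) x) (exist _ (cmp c' c) hcc)
                 = cmp (put G (cod b) (exist _ c' h')) b).
    { unfold b. apply (put_cmp G (fob (get F) x) c c' hc h' hcc). }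
    set (b' := put G (cod b) (exist _ c' h')) in *.
    assert (hdb' : dom b' = fob (get F) x1) by (unfold b'; rewrite put_dom; auto).
    assert (hbb : dom (cmp b' b) = fob (get F) x).
    { rewrite dom_cmp. apply pd. unfold b'. rewrite put_dom. reflexivity. }
    erewrite (put_irr F (x1:=x) (x2:=x) (b2:=cmp b' b) _ hbb eq_refl E1).
    rewrite (put_cmp F x b b' pd hdb' hbb).
    f_equal. apply put_irr; [reflexivity|].
    unfold b'. apply put_irr; auto.
Defined.

Definition lens_mono A B (L : Lens A B) : Prop :=
  forall (C : Category) (G H : Lens C A), lens_comp G L = lens_comp H L -> G = H.

Definition discrete_opfibration A B (F : Functor A B) : Prop :=
  forall (x : ob A) (b : mor B), dom b = fob F x ->
    exists a : mor A, (dom a = x /\ fmor F a = b) /\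
      forall a' : mor A, dom a' = x /\ fmor F a' = b -> a' = a.

Definition injective_on_objects A B (F : Functor A B) : Prop :=
  forall x y : ob A, fob F x = fob F y -> x = y.

Definition cosieve A B (F : Functor A B) : Prop :=
  discrete_opfibration F /\ injective_on_objects F.

(* Main.v *)
Require Import Defs.
From Stdlib Require Import ProofIrrelevance FunctionalExtensionality ClassicalEpsilon.

Lemma sig_eq {T : Type} {P : T -> Prop} (a b : sig P) :
  proj1_sig a = proj1_sig b -> a = b.
Proof.
  destruct a as [a ha], b as [b hb]; simpl; intros ->.
  f_equal; apply proof_irrelevance.
Qed.

Lemma functor_ext A B (F1 F2 : Functor A B) :
  (forall x, fob F1 x = fob F2 x) -> (forall f, fmor F1 f = fmor F2 f) -> F1 = F2.
Proof.
  intros Ho Hm.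
  destruct F1 as [o1 m1 a1 b1 c1 d1], F2 as [o2 m2 a2 b2 c2 d2]; simpl in *.
  assert (o1 = o2) by (apply functional_extensionality; auto). subst o2.
  assert (m1 = m2) by (apply functional_extensionality; auto). subst m2.
  f_equal; apply proof_irrelevance.
Qed.

Lemma lens_ext A B (L1 L2 : Lens A B) (e : get L1 = get L2) :
  (forall x b h1 h2, put L1 x (exist _ b h1) = put L2 x (exist _ b h2)) -> L1 = L2.
Proof.
  destruct L1 as [g1 p1 a1 b1 c1 d1], L2 as [g2 p2 a2 b2 c2 d2]; simpl in *.
  subst g2. intros H.
  assert (p1 = p2).
  { apply functional_extensionality_dep; intro x.
    apply functional_extensionality; intros [b h]. apply H. }
  subst p2. f_equal; apply proof_irrelevance.
Qed.

Lemma lens_eq_put A B (K1 K2 : Lens A B) : K1 = K2 ->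
  forall x c h1 h2, put K1 x (exist _ c h1) = put K2 x (exist _ c h2).
Proof. intros -> x c h1 h2. apply put_irr; reflexivity. Qed.

Lemma cosieve_put_unique A B (L : Lens A B) : discrete_opfibration (get L) ->
  forall x b h a, dom a = x -> fmor (get L) a = b -> put L x (exist _ b h) = a.
Proof.
  intros Hd x b h a Ha Hb.
  destruct (Hd x b h) as [a0 [_ U]].
  rewrite (U a (conj Ha Hb)).
  apply U. split; [apply put_dom| apply put_get].
Qed.

Section Build.
Variables (A B : Category) (J : Functor A B) (Hd : discrete_opfibration J).

Definition dput (x : ob A) (s : {b : mor B | dom b = fob J x}) : mor A :=
  proj1_sig (constructive_indefinite_description _
    (Hd x (proj1_sig s) (proj2_sig s))).

Lemma dput_spec x s : (dom (dput x s) = x /\ fmor J (dput x s) = proj1_sig s) /\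
  forall a', dom a' = x /\ fmor J a' = proj1_sig s -> a' = dput x s.
Proof. unfold dput. destruct constructive_indefinite_description as [a Ha]. exact Ha. Qed.

Definition dlens : Lens A B.
Proof.
  refine {| get := J; put := dput |}.
  - intros x b. apply (dput_spec x b).
  - intros x b. apply (dput_spec x b).
  - intros x h. symmetry. apply (dput_spec x _). simpl.
    split; [apply dom_idm| apply fidm].
  - intros x b b' hb hb' hbb. symmetry. apply (dput_spec x _). simpl.
    destruct (dput_spec x (exist _ b hb)) as [[d1 g1] _].
    destruct (dput_spec _ (exist _ b' hb')) as [[d2 g2] _].
    simpl in *. split.
    + rewrite dom_cmp; auto.
    + rewrite fcmp by auto. rewrite g1, g2. reflexivity.
Defined.
End Build.

Section Pair.
Variables (A B : Category) (L : Lens A B).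
Notation J := (get L).

Definition Pob := {p : ob A * ob A | fob J (fst p) = fob J (snd p)}.
Definition Pmor := {m : mor A * mor A | fmor J (fst m) = fmor J (snd m)}.

Definition Pdom (m : Pmor) : Pob.
Proof.
  refine (exist _ (dom (fst (proj1_sig m)), dom (snd (proj1_sig m))) _).
  simpl. rewrite <- !fdom. f_equal. apply (proj2_sig m).
Defined.

Definition Pcod (m : Pmor) : Pob.
Proof.
  refine (exist _ (cod (fst (proj1_sig m)), cod (snd (proj1_sig m))) _).
  simpl. rewrite <- !fcod. f_equal. apply (proj2_sig m).
Defined.

Definition Pidm (x : Pob) : Pmor.
Proof.
  refine (exist _ (idm (fst (proj1_sig x)), idm (snd (proj1_sig x))) _).
  simpl. rewrite !fidm. f_equal. apply (proj2_sig x).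
Defined.

Definition Pcmp (g f : Pmor) : Pmor :=
  match excluded_middle_informative
    (fmor J (cmp (fst (proj1_sig g)) (fst (proj1_sig f)))
     = fmor J (cmp (snd (proj1_sig g)) (snd (proj1_sig f)))) with
  | left h => exist _ (cmp (fst (proj1_sig g)) (fst (proj1_sig f)),
                       cmp (snd (proj1_sig g)) (snd (proj1_sig f))) h
  | right _ => f
  end.

Lemma Pcmp_eq g f : cod (fst (proj1_sig f)) = dom (fst (proj1_sig g)) ->
  cod (snd (proj1_sig f)) = dom (snd (proj1_sig g)) ->
  proj1_sig (Pcmp g f) = (cmp (fst (proj1_sig g)) (fst (proj1_sig f)),
                          cmp (snd (proj1_sig g)) (snd (proj1_sig f))).
Proof.
  intros h1 h2. unfold Pcmp.
  destruct excluded_middle_informative as [h|n]; [reflexivity|].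
  exfalso; apply n. rewrite !fcmp by auto.
  f_equal; [apply (proj2_sig g)|apply (proj2_sig f)].
Qed.

Lemma Pcomp f g : Pcod f = Pdom g ->
  cod (fst (proj1_sig f)) = dom (fst (proj1_sig g)) /\
  cod (snd (proj1_sig f)) = dom (snd (proj1_sig g)).
Proof.
  intros e. apply (f_equal (@proj1_sig _ _)) in e. simpl in e.
  injection e; auto.
Qed.

Definition PCat : Category.
Proof.
  refine {| ob := Pob; mor := Pmor; dom := Pdom; cod := Pcod; idm := Pidm; cmp := Pcmp |}.
  - intros x; apply sig_eq; simpl. rewrite !dom_idm. destruct x as [[] ?]; reflexivity.
  - intros x; apply sig_eq; simpl. rewrite !cod_idm. destruct x as [[] ?]; reflexivity.
  - intros f g e. destruct (Pcomp f g e) as [h1 h2].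
    apply sig_eq; simpl. rewrite Pcmp_eq by auto. simpl.
    rewrite !dom_cmp by auto. reflexivity.
  - intros f g e. destruct (Pcomp f g e) as [h1 h2].
    apply sig_eq; simpl. rewrite Pcmp_eq by auto. simpl.
    rewrite !cod_cmp by auto. reflexivity.
  - intros f. apply sig_eq. rewrite Pcmp_eq by (simpl; rewrite ?cod_idm, ?dom_idm; reflexivity).
    simpl. rewrite !cmp_id_r. destruct f as [[] ?]; reflexivity.
  - intros f. apply sig_eq. rewrite Pcmp_eq by (simpl; rewrite ?cod_idm, ?dom_idm; reflexivity).
    simpl. rewrite !cmp_id_l. destruct f as [[] ?]; reflexivity.
  - intros f g h e1 e2. destruct (Pcomp f g e1) as [h1 h2].
    destruct (Pcomp g h e2) as [h3 h4].
    assert (Egf := Pcmp_eq g f h1 h2). assert (Ehg := Pcmp_eq h g h3 h4).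
    apply sig_eq.
    rewrite (Pcmp_eq h (Pcmp g f)); rewrite ?Egf; simpl; try (rewrite cod_cmp; auto).
    rewrite (Pcmp_eq (Pcmp h g) f); rewrite ?Ehg; simpl; try (rewrite dom_cmp; auto).
    rewrite !cmp_assoc by auto. reflexivity.
Defined.

Definition P1get : Functor PCat A.
Proof.
  refine {| fob := fun x : ob PCat => fst (proj1_sig x);
            fmor := fun m : mor PCat => fst (proj1_sig m) |}; try reflexivity.
  intros f g e. destruct (Pcomp f g e) as [h1 h2]. simpl.
  rewrite (Pcmp_eq g f h1 h2). reflexivity.
Defined.

Definition P2get : Functor PCat A.
Proof.
  refine {| fob := fun x : ob PCat => snd (proj1_sig x);
            fmor := fun m : mor PCat => snd (proj1_sig m) |}; try reflexivity.
  intros f g e. destruct (Pcomp f g e) as [h1 h2]. simpl.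
  rewrite (Pcmp_eq g f h1 h2). reflexivity.
Defined.

Lemma aux1 (x : Pob) (b : mor A) : dom b = fst (proj1_sig x) ->
  dom (fmor J b) = fob J (snd (proj1_sig x)).
Proof. intros h. rewrite fdom, h. apply (proj2_sig x). Qed.

Lemma aux2 (x : Pob) (b : mor A) : dom b = snd (proj1_sig x) ->
  dom (fmor J b) = fob J (fst (proj1_sig x)).
Proof. intros h. rewrite fdom, h. symmetry. apply (proj2_sig x). Qed.

Definition put1 (x : Pob) (s : {b : mor A | dom b = fst (proj1_sig x)}) : Pmor.
Proof.
  refine (exist _ (proj1_sig s, put L (snd (proj1_sig x))
             (exist _ (fmor J (proj1_sig s)) (aux1 x _ (proj2_sig s)))) _).
  simpl. rewrite put_get. reflexivity.
Defined.

Definition put2 (x : Pob) (s : {b : mor A | dom b = snd (proj1_sig x)}) : Pmor.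
Proof.
  refine (exist _ (put L (fst (proj1_sig x))
             (exist _ (fmor J (proj1_sig s)) (aux2 x _ (proj2_sig s))), proj1_sig s) _).
  simpl. rewrite put_get. reflexivity.
Defined.

Definition P1 : Lens PCat A.
Proof.
  refine {| get := P1get; put := put1 |}.
  - intros x b. apply sig_eq. destruct x as [[x1 x2] hx], b as [b hb]. simpl.
    rewrite put_dom. simpl in hb. rewrite hb. reflexivity.
  - intros x b. reflexivity.
  - intros x h. apply sig_eq. destruct x as [[x1 x2] hx]. simpl.
    f_equal. rewrite <- (put_idm L x2 (dom_idm _ _)).
    apply put_irr; [reflexivity|]. rewrite fidm. simpl in hx. rewrite hx. reflexivity.
  - intros x b b' hb hb' hbb. apply sig_eq. destruct x as [[x1 x2] hx]. simpl in *.
    rewrite Pcmp_eq; simpl.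
    + f_equal.
      erewrite put_irr with (b2 := cmp (fmor J b') (fmor J b)); [| reflexivity | apply fcmp].
      erewrite put_cmp. reflexivity.
      rewrite hb'. reflexivity.
    + rewrite hb'. reflexivity.
    + rewrite put_dom. reflexivity.
  Unshelve. rewrite dom_cmp, fdom, hb; [exact hx|]. rewrite fcod, fdom, hb'. reflexivity.
Defined.

Definition P2 : Lens PCat A.
Proof.
  refine {| get := P2get; put := put2 |}.
  - intros x b. apply sig_eq. destruct x as [[x1 x2] hx], b as [b hb]. simpl.
    rewrite put_dom. simpl in hb. rewrite hb. reflexivity.
  - intros x b. reflexivity.
  - intros x h. apply sig_eq. destruct x as [[x1 x2] hx]. simpl.
    f_equal. rewrite <- (put_idm L x1 (dom_idm _ _)).
    apply put_irr; [reflexivity|]. rewrite fidm. simpl in hx. rewrite hx. reflexivity.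
  - intros x b b' hb hb' hbb. apply sig_eq. destruct x as [[x1 x2] hx]. simpl in *.
    rewrite Pcmp_eq; simpl.
    + f_equal.
      erewrite put_irr with (b2 := cmp (fmor J b') (fmor J b)); [| reflexivity | apply fcmp].
      erewrite put_cmp. reflexivity.
      rewrite hb'. reflexivity.
    + rewrite put_dom. reflexivity.
    + rewrite hb'. reflexivity.
  Unshelve. rewrite dom_cmp, fdom, hb; [symmetry; exact hx|]. rewrite fcod, fdom, hb'. reflexivity.
Defined.

Lemma P12 : lens_comp P1 L = lens_comp P2 L.
Proof.
  unshelve eapply lens_ext.
  - apply functor_ext.
    + intros [[x1 x2] hx]. exact hx.
    + intros [[m1 m2] hm]. exact hm.
  - intros [[x1 x2] hx] c h1 h2. simpl in *.
    unfold lens_comp_put. simpl. apply sig_eq. simpl. f_equal.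
    + apply put_irr; [reflexivity|]. rewrite put_get. reflexivity.
    + apply put_irr; [reflexivity|]. rewrite put_get. reflexivity.
Qed.

End Pair.

Theorem corollary3p3 :
  (forall (A B : Category) (J : Functor A B), cosieve J ->
     (exists L : Lens A B, get L = J) /\
     (forall L1 L2 : Lens A B, get L1 = J -> get L2 = J -> L1 = L2) /\
     (forall L : Lens A B, get L = J -> lens_mono L)) /\
  (forall (A B : Category) (L : Lens A B), lens_mono L -> cosieve (get L)).
Proof.
  split.
  - intros A B J [Hd Hi]. split; [|split].
    + exists (@dlens A B J Hd). reflexivity.
    + intros L1 L2 e1 e2. subst J.
      apply (@lens_ext A B L1 L2 (eq_sym e2)).
      intros x b h1 h2. symmetry. apply (@cosieve_put_unique A B L2).
      * rewrite e2. exact Hd.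
      * apply put_dom.
      * rewrite e2. apply put_get.
    + intros L e. subst J. intros C G H e.
      assert (Eo : forall x, fob (get G) x = fob (get H) x).
      { intro x. apply Hi.
        exact (f_equal (fun F => fob F x) (f_equal (@get _ _) e)). }
      assert (Eg : get G = get H).
      { apply functor_ext; [exact Eo|]. intro f.
        assert (E1 := f_equal (fun F => fmor F f) (f_equal (@get _ _) e)). simpl in E1.
        assert (hd : dom (fmor (get L) (fmor (get G) f)) = fob (get L) (fob (get G) (dom f)))
          by (rewrite !fdom; reflexivity).
        destruct (Hd _ _ hd) as [a [_ U]].
        rewrite (U (fmor (get G) f)) by (split; [apply fdom|reflexivity]).
        symmetry. apply U. split; [rewrite fdom; symmetry; apply Eo| symmetry; exact E1]. }
      apply (@lens_ext C A G H Eg).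
      intros x a h1 h2.
      assert (hb1 : dom (fmor (get L) a) = fob (get L) (fob (get G) x))
        by (rewrite fdom, h1; reflexivity).
      assert (hb2 : dom (fmor (get L) a) = fob (get L) (fob (get H) x))
        by (rewrite fdom, h2; reflexivity).
      assert (Ea1 : put L (fob (get G) x) (exist _ _ hb1) = a)
        by (apply cosieve_put_unique; auto).
      assert (Ea2 : put L (fob (get H) x) (exist _ _ hb2) = a)
        by (apply cosieve_put_unique; auto).
      assert (E := @lens_eq_put C B _ _ e x (fmor (get L) a) hb1 hb2).
      unfold lens_comp at 1 2 in E. simpl in E. unfold lens_comp_put in E.
      transitivity (put G x (exist _ (put L (fob (get G) x) (exist _ _ hb1))
                      (put_dom L (fob (get G) x) (exist _ _ hb1)))).
      { apply put_irr; auto. }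
      rewrite E. apply put_irr; auto.
  - intros A B L Hm.
    assert (E := Hm _ _ _ (@P12 A B L)).
    split.
    + intros x b h. exists (put L x (exist _ b h)). split.
      * split; [apply put_dom| apply put_get].
      * intros a' [ha hb].
        assert (hm : fmor (get L) (fst (a', put L x (exist _ b h)))
                     = fmor (get L) (snd (a', put L x (exist _ b h))))
          by (simpl; rewrite put_get, hb; reflexivity).
        exact (f_equal (fun F => fmor F (exist _ _ hm : mor (@PCat A B L))) (f_equal (@get _ _) E)).
    + intros x y hxy.
      exact (f_equal (fun F => fob F (exist _ (x, y) hxy : ob (@PCat A B L))) (f_equal (@get _ _) E)).
Qed.
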